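(* Let $\kappa$ be an uncountable cardinal and let $(G_\alpha:\alpha<\kappa)$ be topological groups, each with more than one element. If ${\sf KH}(\kappa,\aleph_1)$ holds, then $\prod_{\alpha<\kappa}G_\alpha$ (with the product topology) has a Rothberger bounded subset, indeed a Rothberger bounded subgroup, of cardinality $\kappa^+$.
   Context: All topological groups are assumed Tychonoff. A subset $X$ of a topological group $(G,* )$ is Rothberger bounded if for every sequence $(U_n:n<\omega)$ of open neighborhoods of the identity there are $g_n\in G$ with $X\subseteq\bigcup_n g_n*U_n$. For uncountable cardinals $\lambda\le\kappa$, a $(\kappa,\lambda)$ Kurepa family is a family $\mathcal F$ of subsets of $\kappa$ with $|\mathcal F|>\kappa$ such that for every infinite $A\subseteq\kappa$ with $|A|<\lambda$, $|\{X\cap A:X\in\mathcal F\}|\le|A|$. ${\sf KH}(\kappa,\lambda)$ is the statement that a $(\kappa,\lambda)$ Kurepa family exists. *)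

(* Defs.v *)
From HB Require Import structures.
From mathcomp Require Import all_boot all_order all_algebra.
From mathcomp Require Import all_classical all_reals all_analysis.
From mathcomp Require Import Rstruct Rstruct_topology.
From Stdlib Require Import Rdefinitions.

Set Implicit Arguments.
Unset Strict Implicit.
Unset Printing Implicit Defensive.

Local Open Scope classical_set_scope.

Definition completely_regular (T : topologicalType) : Prop :=
  forall (C : set T) (x : T), closed C -> ~ C x ->
    exists f : T -> Rdefinitions.R,
      continuous f /\ f x = 0%R /\ (forall y, C y -> f y = 1%R).

Definition tychonoff_space (T : topologicalType) : Prop :=
  accessible_space T /\ completely_regular T.

Record topGroup (T : topologicalType) := TopGroup {
  tg_mul : T -> T -> T;
  tg_inv : T -> T;
  tg_one : T;
  tg_mulA : forall x y z, tg_mul x (tg_mul y z) = tg_mul (tg_mul x y) z;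
  tg_mul1g : forall x, tg_mul tg_one x = x;
  tg_mulg1 : forall x, tg_mul x tg_one = x;
  tg_mulVg : forall x, tg_mul (tg_inv x) x = tg_one;
  tg_mulgV : forall x, tg_mul x (tg_inv x) = tg_one;
  tg_mul_cont : continuous (fun p : T * T => tg_mul p.1 p.2);
  tg_inv_cont : continuous tg_inv;
  tg_tychonoff : tychonoff_space T
}.

Definition prod_mul (K : Type) (G : K -> topologicalType)
  (tg : forall a, topGroup (G a)) (f g : prod_topology G) : prod_topology G :=
  fun a => tg_mul (tg a) (f a) (g a).
Definition prod_inv (K : Type) (G : K -> topologicalType)
  (tg : forall a, topGroup (G a)) (f : prod_topology G) : prod_topology G :=
  fun a => tg_inv (tg a) (f a).
Definition prod_one (K : Type) (G : K -> topologicalType)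
  (tg : forall a, topGroup (G a)) : prod_topology G :=
  fun a => tg_one (tg a).

Definition prod_is_subgroup (K : Type) (G : K -> topologicalType)
  (tg : forall a, topGroup (G a)) (S : set (prod_topology G)) : Prop :=
  S (prod_one tg) /\
  (forall x y, S x -> S y -> S (prod_mul tg x y)) /\
  (forall x, S x -> S (prod_inv tg x)).

Definition prod_rothberger_bounded (K : Type) (G : K -> topologicalType)
  (tg : forall a, topGroup (G a)) (X : set (prod_topology G)) : Prop :=
  forall U : nat -> set (prod_topology G),
    (forall n, open (U n) /\ U n (prod_one tg)) ->
    exists g : nat -> prod_topology G,
      X `<=` \bigcup_n [set prod_mul tg (g n) u | u in U n].

(* (kappa, lambda) Kurepa family with lambda = aleph_1, kappa represented by
   a type K: F a family of subsets of K with |F| > |K| such that for every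
   infinite A with |A| < aleph_1 (i.e. countable), |{X cap A : X in F}| <= |A|. *)
Definition KH_aleph1 (K : Type) : Prop :=
  exists F : set (set K),
    ~ (card_le F [set: K]) /\
    forall A : set K, infinite_set A -> countable A ->
      card_le [set X `&` A | X in F] A.

Definition has_card_succ (K : Type) (U : Type) (S : set U) : Prop :=
  ~ (card_le S [set: K]) /\
  forall T : set U, T `<=` S -> ~ (card_le T [set: K]) -> card_le S T.

(* Main.v *)
Require Import Defs.
From mathcomp Require Import all_boot all_order all_algebra.
From mathcomp Require Import all_classical all_reals all_analysis.
From mathcomp Require Import wochoice.
Set Implicit Arguments.
Unset Strict Implicit.
Unset Printing Implicit Defensive.
Local Open Scope classical_set_scope.

Definition cle T U (A : set T) (B : set U) := A = set0 \/
  exists f : T -> U, (forall x, A x -> B (f x)) /\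
     (forall x y, A x -> A y -> f x = f y -> x = y).

Lemma cleP T U (A : set T) (B : set U) : card_le A B <-> cle A B.
Proof.
elim/Ppointed: U => U in B *.
  have B0 : B = set0 by apply/seteqP; split=> x // _; exact: (no x).
  subst B; split.
    by move/card_le0P => ->; left.
  case=> [->|[f [fB _]]]; first exact: card_ge0.
  apply/card_le0P; apply/seteqP; split=> x // /fB [].
split.
  move/pcard_leP=> /injfunPex [f fB finj]; right; exists f; split=> //.
  by move=> x y Ax Ay; apply: finj; rewrite inE.
case=> [->|[f [fB finj]]]; first exact: card_ge0.
apply/pcard_leP/injfunPex; exists f => //.
by move=> x y; rewrite !inE => Ax Ay; apply: finj.
Qed.

Lemma cle_refl T (A : set T) : cle A A.
Proof. by right; exists id. Qed.

Lemma cle_trans T U V (A : set T) (B : set U) (C : set V) :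
  cle A B -> cle B C -> cle A C.
Proof. move=> /cleP h1 /cleP h2; apply/cleP; exact: card_le_trans h1 h2. Qed.

Lemma cle_sub T (A B : set T) : A `<=` B -> cle A B.
Proof. by move=> AB; right; exists id; split=> // x /AB. Qed.

Lemma cle_image T U (f : T -> U) (A : set T) : cle (f @` A) A.
Proof. apply/cleP; exact: card_image_le. Qed.

Lemma cle_inj T U (f : T -> U) (A : set T) (B : set U) :
  (forall x, A x -> B (f x)) -> (forall x y, A x -> A y -> f x = f y -> x = y) ->
  cle A B.
Proof. by move=> h1 h2; right; exists f. Qed.

Lemma cle_setX T1 T2 U1 U2 (A1 : set T1) (A2 : set T2) (B1 : set U1) (B2 : set U2) :
  cle A1 B1 -> cle A2 B2 -> cle (A1 `*` A2) (B1 `*` B2).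
Proof.
case=> [E|[f [f1 f2]]].
  by left; rewrite E; apply/seteqP; split=> -[x y] // [].
case=> [E|[g [g1 g2]]].
  by left; rewrite E; apply/seteqP; split=> -[x y] // [].
right; exists (fun p => (f p.1, g p.2)); split.
  by move=> [x y] [/= ? ?]; split => /=; [apply: f1|apply: g1].
move=> [x y] [x' y'] [/= Ax Ay] [/= Ax' Ay'] [] e1 e2.
by rewrite (f2 _ _ Ax Ax' e1) (g2 _ _ Ay Ay' e2).
Qed.

Lemma cle_infinite T (A : set T) : infinite_set A <-> cle [set: nat] A.
Proof. by rewrite infiniteP cleP. Qed.

Lemma cle_empty_r T U (A : set T) : cle A (@set0 U) -> A = set0.
Proof. by case=> // -[f [fB _]]; apply/seteqP; split=> x // /fB. Qed.

Lemma cle_bij T U (A : set T) (B : set U) (u0 : U) : cle A B -> cle B A ->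
  exists k : T -> U, (forall x, A x -> B (k x)) /\
    (forall x y, A x -> A y -> k x = k y -> x = y) /\
    (forall y, B y -> exists2 x, A x & k x = y).
Proof.
move=> /cleP h1 /cleP h2; have := Cantor_Bernstein h1 h2.
elim/Ppointed: U => U in B u0 h1 h2 *; first by case: (no u0).
move=> /card_set_bijP [k [kf ki ks]]; exists k; split => //; split.
  by move=> x y Ax Ay; apply: ki; rewrite inE.
by move=> y /ks [x Ax <-]; exists x.
Qed.


Lemma graph_cle T U (A : set T) (B : set U) (G : set (T * U)) :
  G `<=` A `*` B ->
  (forall p q, G p -> G q -> p.2 = q.2 -> p = q) ->
  (forall x, A x -> exists y, G (x, y)) -> cle A B.
Proof.
move=> GAB Gi Gt.
have [A0|/set0P [a0 Aa0]] := eqVneq A set0; first by left.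
have [b0 _] := Gt a0 Aa0.
have [f hf] : exists f : T -> U, forall x, A x -> G (x, f x).
  have h : forall x, exists y, A x -> G (x, y).
    move=> x; have [Ax|nAx] := pselect (A x).
      by have [y Gy] := Gt x Ax; exists y.
    by exists b0.
  have [f hf] := choice h; by exists f.
right; exists f; split.
  by move=> x /hf /GAB [].
move=> x y Ax Ay e.
have := Gi _ _ (hf x Ax) (hf y Ay); rewrite /= e => /(_ erefl).
by case.
Qed.

Lemma cle_total T U (A : set T) (B : set U) : cle A B \/ cle B A.
Proof.
pose P (G : set (T * U)) := G `<=` A `*` B /\
  (forall p q, G p -> G q -> p.1 = q.1 -> p = q) /\
  (forall p q, G p -> G q -> p.2 = q.2 -> p = q).
have [M [[MAB [M1 M2]] Mmax]] : exists M, P M /\ forall N, M `<` N -> ~ P N.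
  apply: Zorn_bigcup => F FP Ftot; split; [|split].
  - by move=> p [X /FP [h _] Xp]; exact: h.
  - move=> p q [X FX Xp] [Y FY Yq].
    have [XY|YX] := Ftot _ _ FX FY.
      by have [_ [h _]] := FP _ FY; apply: h => //; exact: XY.
    by have [_ [h _]] := FP _ FX; apply: h => //; exact: YX.
  - move=> p q [X FX Xp] [Y FY Yq].
    have [XY|YX] := Ftot _ _ FX FY.
      by have [_ [_ h]] := FP _ FY; apply: h => //; exact: XY.
    by have [_ [_ h]] := FP _ FX; apply: h => //; exact: YX.
have [tA|ntA] := pselect (forall x, A x -> exists y, M (x, y)).
  by left; apply: (graph_cle MAB).
have [tB|ntB] := pselect (forall y, B y -> exists x, M (x, y)).
  right; apply: (@graph_cle _ _ B A [set p | M (p.2, p.1)]).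
  - by move=> [y x] /MAB [].
  - move=> [y x] [y' x'] /= h1 h2 e; subst x'.
    by have := M1 _ _ h1 h2 erefl => -[->].
  - by move=> y /tB [x Mx]; exists x.
exfalso.
have [a [Aa na]] : exists a, A a /\ forall y, ~ M (a, y).
  apply: contrapT => h; apply: ntA => x Ax; apply: contrapT => h2; apply: h.
  by exists x; split => // y My; apply: h2; exists y.
have [b [Bb nb]] : exists b, B b /\ forall x, ~ M (x, b).
  apply: contrapT => h; apply: ntB => y By; apply: contrapT => h2; apply: h.
  by exists y; split => // x Mx; apply: h2; exists x.
apply: (Mmax (M `|` [set (a, b)])).
  split; first by move=> p Mp; left.
  by move=> /(_ (a, b)) h; apply: (na b); have := h (or_intror erefl).
split; [|split].
- by move=> p [/MAB //|->].
- move=> p q [Mp|->] [Mq|->] //=.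
  + exact: M1.
  + by move: Mp; case: p => x y /= Mp ex; subst x; case: (na y).
  + by move: Mq; case: q => x y /= Mq ex; subst x; case: (na y).
- move=> p q [Mp|->] [Mq|->] //=.
  + exact: M2.
  + by move: Mp; case: p => x y /= Mp ex; subst y; case: (nb x).
  + by move: Mq; case: q => x y /= Mq ex; subst y; case: (nb x).
Qed.

Lemma cle_fun T U (A : set T) (B : set U) (u : U) : cle A B ->
  exists f : T -> U, (forall x, A x -> B (f x)) /\
     (forall x y, A x -> A y -> f x = f y -> x = y).
Proof.
case=> [A0|//]; exists (fun _ => u); rewrite A0; split => //.
Qed.

Lemma inf_two U (R : set U) : infinite_set R -> exists r0 r1, R r0 /\ R r1 /\ r0 <> r1.
Proof.
move/cle_infinite; case=> [E|[f [fR fi]]].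
  by have : [set: nat] 0%N by []; rewrite E.
exists (f 0%N), (f 1%N); split; [exact: fR|split; [exact: fR|]].
by move=> /fi => /(_ I I).
Qed.

Lemma cle_union2 T U (X Y : set T) (R : set U) : infinite_set R ->
  cle (R `*` R) R -> cle X R -> cle Y R -> cle (X `|` Y) R.
Proof.
move=> Ri RR cX cY; have [r0 [r1 [R0 [R1 r01]]]] := inf_two Ri.
have [f [fR fi]] := cle_fun r0 cX.
have [g [gR gi]] := cle_fun r0 cY.
apply: cle_trans RR.
right; exists (fun x => if `[< X x >] then (r0, f x) else (r1, g x)); split.
  move=> x XYx; case: ifPn => [/asboolP Xx|/asboolP nXx].
    by split => //=; apply: fR.
  by split => //=; apply: gR; case: XYx.
move=> x y XYx XYy.
case: ifPn => [/asboolP Xx|/asboolP nXx]; case: ifPn => [/asboolP Xy|/asboolP nXy].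
- by case=> /fi; apply.
- by case=> e; case: r01.
- by case=> e; case: r01.
- have Yx : Y x by case: XYx.
  have Yy : Y y by case: XYy.
  by case=> /gi; apply.
Qed.

Lemma chain2 T (F : set (set T)) (x y : T) : total_on F subset ->
  (\bigcup_(X in F) X) x -> (\bigcup_(X in F) X) y ->
  exists2 Z, F Z & Z x /\ Z y.
Proof.
move=> Ftot [X FX Xx] [Y FY Yy].
have [XY|YX] := Ftot _ _ FX FY.
  by exists Y => //; split => //; apply: XY.
by exists X => //; split => //; apply: YX.
Qed.

Definition rng T (G : set ((T*T)*T)) := [set z | exists p, G (p, z)].
Definition Qh T (A : set T) (G : set ((T*T)*T)) :=
  (forall a b, G a -> G b -> a.1 = b.1 -> a = b) /\
  (forall a b, G a -> G b -> a.2 = b.2 -> a = b) /\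
  (forall p, (exists z, G (p, z)) <-> (rng G p.1 /\ rng G p.2)) /\
  rng G `<=` A /\ infinite_set (rng G).

Lemma Qh_cle T (A : set T) G : Qh A G -> cle (rng G `*` rng G) (rng G).
Proof.
move=> [G1 [G2 [Gd _]]].
apply: (@graph_cle _ _ _ _ G).
- move=> [p z] Gpz; split; last by exists p.
  by have [h _] := Gd p; apply: h; exists z.
- exact: G2.
- by move=> p /Gd [z Gz]; exists z.
Qed.

Lemma Qh_union T (A : set T) (F : set (set ((T*T)*T))) :
  (forall Z, F Z -> Qh A Z) -> total_on F subset ->
  forall X0, F X0 -> Qh A (\bigcup_(X in F) X).
Proof.
move=> FQ Ftot X0 FX0.
have rU z : rng (\bigcup_(X in F) X) z <-> exists2 X, F X & rng X z.
  split; first by move=> [p [X FX Xp]]; exists X => //; exists p.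
  by move=> [X FX [p Xp]]; exists p; exists X.
split; [|split; [|split; [|split]]].
- move=> a b Ua Ub; have [Z FZ [Za Zb]] := chain2 Ftot Ua Ub.
  by have [h _] := FQ _ FZ; apply: h.
- move=> a b Ua Ub; have [Z FZ [Za Zb]] := chain2 Ftot Ua Ub.
  by have [_ [h _]] := FQ _ FZ; apply: h.
- move=> p; split.
    move=> [z [X FX Xp]]; have [_ [_ [h _]]] := FQ _ FX.
    have [h1 h2] := (proj1 (h p)) (ex_intro _ z Xp).
    by split; apply/rU; exists X.
  move=> [/rU [X FX [q Xq]] /rU [Y FY [q' Yq']]].
  have [Z FZ [Zq Zq']] := chain2 Ftot (ex_intro2 _ _ X FX Xq) (ex_intro2 _ _ Y FY Yq').
  have [_ [_ [h _]]] := FQ _ FZ.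
  have [z Zz] := (proj2 (h p)) (conj (ex_intro _ q Zq) (ex_intro _ q' Zq')).
  by exists z; exists Z.
- by move=> z /rU [X FX Xz]; have [_ [_ [_ [h _]]]] := FQ _ FX; apply: h.
- have [_ [_ [_ [_ h]]]] := FQ _ FX0.
  apply: (sub_infinite_set _ h) => z rz; apply/rU; by exists X0.
Qed.

Lemma Qh_base T (A : set T) : infinite_set A -> exists G, G !=set0 /\ Qh A G.
Proof.
move=> /cle_infinite [E|[e [eA ei]]].
  by have : [set: nat] 0%N by []; rewrite E.
have [pi [_ pinj psurj]] : exists pi : nat * nat -> nat, set_bij setT setT pi.
  by apply/card_set_bijP; exact: card_nat2.
have pinj' : forall a b, pi a = pi b -> a = b.
  by move=> a b; apply: pinj; rewrite inE.
have ei' : forall a b, e a = e b -> a = b by move=> a b; apply: ei.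
pose G := [set g | exists ij : nat * nat, g = ((e ij.1, e ij.2), e (pi ij))].
have rG z : rng G z <-> exists n, z = e n.
  split; first by move=> [p [ij [_ ->]]]; exists (pi ij).
  move=> [n ->]; have [ij _ pij] := psurj n I.
  by exists (e ij.1, e ij.2); exists ij; rewrite pij.
exists G; split; first by exists ((e 0%N, e 0%N), e (pi (0%N, 0%N))); exists (0%N, 0%N).
split; [|split; [|split; [|split]]].
- move=> a b [[i j] ->] [[i' j'] ->] /= [/ei' -> /ei' ->] //.
- by move=> a b [ij ->] [ij' ->] /= /ei' /pinj' ->.
- move=> [x y]; split.
    move=> [z [ij E]].
    have -> : x = e ij.1 by move: E => /(congr1 (fun g => g.1.1)).
    have -> : y = e ij.2 by move: E => /(congr1 (fun g => g.1.2)).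
    by split; apply/rG; [exists ij.1|exists ij.2].
  move=> [] /= /rG [n ->] /rG [m ->].
  by exists (e (pi (n, m))); exists (n, m).
- by move=> z /rG [n ->]; apply: eA.
- apply/cle_infinite; right; exists e; split; last by move=> x y _ _; apply: ei'.
  by move=> n _; apply/rG; exists n.
Qed.

Lemma hessenberg T (A : set T) : infinite_set A -> cle (A `*` A) A.
Proof.
move=> Ai.
pose P G := G = set0 \/ Qh A G.
have [M [PM Mmax]] : exists M, P M /\ forall N, M `<` N -> ~ P N.
  apply: Zorn_bigcup => F FP Ftot.
  have [[X0 FX0 nX0]|nex] := pselect (exists2 X, F X & X !=set0); last first.
    left; apply/seteqP; split => // p [X FX Xp]; apply: nex; exists X => //; by exists p.
  right.
  have -> : \bigcup_(X in F) X = \bigcup_(X in [set Z | F Z /\ Z !=set0]) X.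
    apply/seteqP; split => p [X FX Xp]; exists X => //; last by case: FX.
    by split => //; exists p.
  apply: (@Qh_union _ _ _ _ _ X0).
  - move=> Z [FZ [z Zz]]; case: (FP _ FZ) => // E.
    by move: Zz; rewrite E.
  - by move=> X Y [FX _] [FY _]; apply: Ftot.
  - by split.
case: PM => [M0|QM].
  exfalso; have [G0 [nG0 QG0]] := Qh_base Ai.
  apply: (Mmax G0); last by right.
  rewrite M0; split => // hs; have [g Gg] := nG0; exact: (hs g Gg).
set R := rng M.
have [M1 [M2 [Md [RA Ri]]]] := QM.
have cRR : cle (R `*` R) R := Qh_cle QM.
suff cAR : cle A R.
  apply: cle_trans (cle_setX cAR cAR) _; apply: cle_trans cRR _; exact: cle_sub.
have [cDR|cRD] := cle_total (A `\` R) R.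
  apply: cle_trans (cle_union2 Ri cRR cDR (cle_refl R)).
  apply: cle_sub => x Ax; have [Rx|nRx] := pselect (R x); [right|left] => //.
exfalso.
have [r0 [_ [Rr0 _]]] := inf_two Ri.
have [h [hD hi]] := cle_fun r0 cRD.
pose C := h @` R.
have CA : C `<=` A by move=> _ [r Rr <-]; case: (hD r Rr).
have CnR : forall c, C c -> ~ R c by move=> _ [r Rr <-]; case: (hD r Rr).
pose D := [set p : T * T | (R `|` C) p.1 /\ (R `|` C) p.2 /\ ~ (R p.1 /\ R p.2)].
have cCR : cle C R := cle_image h R.
have cRC : cle R C by right; exists h; split => // r Rr; exists r.
have cUR : cle (R `|` C) R := cle_union2 Ri cRR (cle_refl R) cCR.
have cDC : cle D C.
  have DU : D `<=` (R `|` C) `*` (R `|` C) by move=> p [? [? _]]; split.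
  apply: cle_trans (cle_sub DU) _.
  apply: cle_trans (cle_setX cUR cUR) _; exact: cle_trans cRR cRC.
have Cc0 : C (h r0) by exists r0.
have Dcc : forall c, C c -> D (c, c).
  move=> c Cc; split; [by right|split; [by right|]]; by move=> [/CnR].
have cCD : cle C D.
  right; exists (fun c => (c, c)); split; last by move=> x y _ _ [].
  exact: Dcc.
have [k [kD [ki ks]]] := cle_bij (h r0) cDC cCD.
pose M' := M `|` [set g | D g.1 /\ g.2 = k g.1].
have rM' z : rng M' z <-> R z \/ C z.
  split.
    move=> [p [Mp|[Dp /= ->]]]; [left; by exists p|right; exact: kD].
  case=> [[p Mp]|Cz]; first by exists p; left.
  have [p Dp kp] := ks z Cz; by exists p; right.
apply: (Mmax M').
  split; first by move=> g Mg; left.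
  move=> sub.
  have : M' ((h r0, h r0), k (h r0, h r0)) by right; split => //; exact: Dcc.
  move/sub => Mg.
  have : R (k (h r0, h r0)) by exists (h r0, h r0).
  by apply: CnR; apply: kD; exact: Dcc.
have MdR : forall p z, M (p, z) -> R p.1 /\ R p.2.
  by move=> p z Mpz; apply/Md; exists z.
right; split; [|split; [|split; [|split]]].
- move=> [p z] [p' z'] [Ma|[Da /= ea]] [Mb|[Db /= eb]] /= epp.
  + exact: (M1 (p, z) (p', z')).
  + by subst p'; exfalso; case: Db => _ [_]; apply; exact: (MdR _ _ Ma).
  + by subst p'; exfalso; case: Da => _ [_]; apply; exact: (MdR _ _ Mb).
  + by subst p'; rewrite ea eb.
- move=> [p z] [p' z'] [Ma|[Da /= ea]] [Mb|[Db /= eb]] /= ezz.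
  + exact: (M2 (p, z) (p', z')).
  + by exfalso; apply: (CnR z); [rewrite ezz eb; exact: kD|exists p].
  + by exfalso; apply: (CnR z'); [rewrite -ezz ea; exact: kD|exists p'].
  + by rewrite ea eb in ezz; have /= epp := ki _ _ Da Db ezz; rewrite ea eb epp.
- move=> p; split.
    move=> [z [Mpz|[Dp _]]].
      by have [? ?] := MdR _ _ Mpz; split; apply/rM'; left.
    by case: Dp => [? [? _]]; split; apply/rM'.
  move=> [/rM' h1 /rM' h2].
  have [RR|nRR] := pselect (R p.1 /\ R p.2).
    by have [z Mz] := (proj2 (Md p)) RR; exists z; left.
  by exists (k p); right.
- by move=> z /rM' [/RA|/CA].
- by apply: (sub_infinite_set _ Ri) => z Rz; apply/rM'; left.
Qed.

Lemma inf_elt T (A : set T) : infinite_set A -> exists a, A a.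
Proof. by move/inf_two => [a [_ [Aa _]]]; exists a. Qed.

Lemma cle_bigcup I0 X Y (I : set I0) (C : set Y) (B : I0 -> set X) :
  infinite_set C -> cle I C -> (forall i, I i -> cle (B i) C) ->
  cle (\bigcup_(i in I) B i) C.
Proof.
move=> Ci cIC cB; have [c0 Cc0] := inf_elt Ci.
have [f [fC fi]] := cle_fun c0 cIC.
have [e he] : exists e : I0 -> X -> Y, forall i, I i ->
    (forall x, B i x -> C (e i x)) /\ (forall x y, B i x -> B i y -> e i x = e i y -> x = y).
  have h : forall i, exists g : X -> Y, I i ->
      (forall x, B i x -> C (g x)) /\ (forall x y, B i x -> B i y -> g x = g y -> x = y).
    move=> i; have [Ii|nIi] := pselect (I i).
      by have [g hg] := cle_fun c0 (cB i Ii); exists g.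
    by exists (fun _ => c0).
  by have [e he] := choice h; exists e.
have [E|/set0P [x0 [i0 _ _]]] := eqVneq (\bigcup_(i in I) B i) set0.
  by left.
have [ix hix] : exists ix : X -> I0, forall x, (\bigcup_(i in I) B i) x -> I (ix x) /\ B (ix x) x.
  have h : forall x, exists i, (\bigcup_(i in I) B i) x -> I i /\ B i x.
    move=> x; have [[i Ii Bx]|nx] := pselect ((\bigcup_(i in I) B i) x).
      by exists i.
    by exists i0.
  by have [ix hix] := choice h; exists ix.
apply: cle_trans (hessenberg Ci).
right; exists (fun x => (f (ix x), e (ix x) x)); split.
  move=> x Ux; have [Ii Bx] := hix x Ux; split => /=; first exact: fC.
  by have [h _] := he _ Ii; apply: h.
move=> x y Ux Uy [] /fi ef ee.
have [Ix Bx] := hix x Ux; have [Iy By] := hix y Uy.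
have eix := ef Ix Iy; rewrite -eix in By ee.
by have [_ h] := he _ Ix; apply: h.
Qed.

Fixpoint lall T (A : set T) (l : seq T) : Prop :=
  if l is x :: l' then A x /\ lall A l' else True.

Lemma cle_lall T U (A : set T) (B : set U) : cle A B -> cle (lall A) (lall B).
Proof.
case=> [A0|[f [fB fi]]].
  have nil : forall l, lall A l -> l = [::].
    by case=> // x l /=; rewrite A0 => -[].
  by right; exists (fun _ => [::]); split => // l l' /nil -> /nil ->.
right; exists (map f); split.
  by elim=> //= x l IH [Ax Al]; split; [exact: fB|exact: IH].
elim=> [|x l IH] [|y l'] //= [Ax Al] [Ay Al'] [exy el].
by rewrite (fi _ _ Ax Ay exy) (IH _ Al Al' el).
Qed.

Lemma cle_seq T (A : set T) : infinite_set A -> cle (lall A) A.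
Proof.
move=> Ai; have [a0 Aa0] := inf_elt Ai.
have -> : lall A = \bigcup_(n in [set: nat]) [set l | lall A l /\ size l = n].
  by apply/seteqP; split => l; [move=> Al; exists (size l)|move=> [n _ []]].
apply: cle_bigcup => //; first exact/cle_infinite.
elim=> [|n IH] _.
  by right; exists (fun _ => a0); split => // l l' [_ /size0nil ->] [_ /size0nil ->].
apply: cle_trans (hessenberg Ai).
have IH' := IH I.
apply: cle_trans (cle_setX (cle_refl A) IH').
right; exists (fun l => (head a0 l, behead l)); split.
  move=> [|x l] /= [Al sl]; first by case: sl.
  case: Al => Ax Al'; split => //=; split => //; by case: sl.
move=> [|x l] [|y l'] /= [_ sl] [_ sl']; try by [case: sl|case: sl'].
move=> [-> ->] //.
Qed.

Section WO.
Variables (X : eqType) (R : rel X) (wo : well_order R).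

Lemma wo_min (P : X -> Prop) : (exists x, P x) ->
  exists z, P z /\ forall x, P x -> R z x.
Proof.
move=> [x Px].
have [z [[zA lb] _]] := @wo [pred y | `[< P y >]] (ex_intro _ x (introT (asboolP _) Px)).
exists z; split; first by move: zA; rewrite inE.
by move=> y Py; apply: lb; rewrite inE.
Qed.

Lemma wo_refl x : R x x.
Proof. by have [z [-> h]] := @wo_min (fun y => y = x) (ex_intro _ x erefl); apply: h. Qed.

Lemma wo_total x y : R x y \/ R y x.
Proof.
have [z [[->|->] h]] := @wo_min (fun u => u = x \/ u = y) (ex_intro _ x (or_introl erefl)).
  by left; apply: h; right.
by right; apply: h; left.
Qed.

Lemma wo_antisym x y : R x y -> R y x -> x = y.
Proof.
move=> xy yx.
have [z [_ uniq]] := @wo [pred u | (u == x) || (u == y)] (ex_intro _ x (introT orP (or_introl (eqxx x)))).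
have mx : minimum_of R [pred u | (u == x) || (u == y)] x.
  split; first by rewrite inE eqxx.
  by move=> u; rewrite inE => /orP[/eqP->|/eqP->] //; exact: wo_refl.
have my : minimum_of R [pred u | (u == x) || (u == y)] y.
  split; first by rewrite inE eqxx orbT.
  by move=> u; rewrite inE => /orP[/eqP->|/eqP->] //; exact: wo_refl.
by rewrite -(uniq _ mx) -(uniq _ my).
Qed.
End WO.

Lemma finite_cle T Y (A : set T) (Ks : set Y) : infinite_set Ks -> finite_set A -> cle A Ks.
Proof.
move=> Ki /finite_set_countable /cleP cA.
exact: cle_trans cA (proj1 (cle_infinite Ks) Ki).
Qed.

Lemma select_succ (X : eqType) Y (F : set X) (Ks : set Y) :
  infinite_set Ks -> ~ cle F Ks ->
  exists F', F' `<=` F /\ ~ cle F' Ks /\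
    forall T, T `<=` F' -> ~ cle T Ks -> cle F' T.
Proof.
move=> Ki nFK.
have [R wo] := well_ordering_principle X.
pose seg (F0 : set X) w := [set x | F0 x /\ R x w /\ x <> w].
have HKK := hessenberg Ki.
have [k0 Kk0] := inf_elt Ki.
suff key : forall F', F' `<=` F -> ~ cle F' Ks -> (forall w, F' w -> cle (seg F' w) Ks) ->
    forall T, T `<=` F' -> ~ cle T Ks -> cle F' T.
  have [[w Fw] |none] := pselect (exists w, F w /\ ~ cle (seg F w) Ks).
    have [w0 [[Fw0 nw0] minw0]] := @wo_min _ _ wo (fun w => F w /\ ~ cle (seg F w) Ks) (ex_intro _ w Fw).
    have sub : seg F w0 `<=` F by move=> x [].
    exists (seg F w0); split => //; split => //.
    apply: key => // x [Fx [Rxw0 xw0]].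
    have cx : cle (seg F x) Ks.
      apply: contrapT => nc; apply: xw0.
      exact: (wo_antisym wo Rxw0 (minw0 x (conj Fx nc))).
    apply: cle_trans cx; apply: cle_sub => y [[Fy _] [Ryx yx]]; by split.
  exists F; split => //; split => //; apply: key => // w Fw.
  by apply: contrapT => nc; apply: none; exists w.
move=> F' sF' nF'K segK T sT nTK.
have cKT : cle Ks T by case: (cle_total T Ks).
have Ti : infinite_set T by move=> fT; apply: nTK; exact: finite_cle.
have cover : F' `<=` \bigcup_(t in T) [set x | F' x /\ R x t].
  move=> x F'x; apply: contrapT => nc.
  apply: nTK; apply: cle_trans (segK x F'x); apply: cle_sub => t Tt.
  have nRxt : ~ R x t by move=> h; apply: nc; exists t.
  split; first exact: sT.
  case: (wo_total wo x t) => // Rtx; split => // etx; apply: nRxt.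
  by rewrite -etx; exact: wo_refl.
apply: cle_trans (cle_sub cover) _.
apply: cle_bigcup => //; first exact: cle_refl.
move=> t Tt; apply: cle_trans cKT.
have sub : [set x | F' x /\ R x t] `<=` seg F' t `|` [set t].
  by move=> x [F'x Rxt]; have [->|xt] := pselect (x = t); [right|left].
apply: cle_trans (cle_sub sub) _.
apply: cle_union2 => //; first exact: segK (sT t Tt).
by right; exists (fun _ => k0); split => // x y -> ->.
Qed.

Section Grp.
Variables (T : topologicalType) (g : topGroup T).
Local Notation mul := (tg_mul g).
Local Notation inv := (tg_inv g).
Local Notation one := (tg_one g).

Lemma tg_inv_uniq x y : mul x y = one -> y = inv x.
Proof.
move=> e; rewrite -(tg_mul1g g y) -(tg_mulVg g x) -tg_mulA e tg_mulg1 //.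
Qed.

Lemma tg_invM x y : inv (mul x y) = mul (inv y) (inv x).
Proof.
symmetry; apply: tg_inv_uniq.
by rewrite -tg_mulA (tg_mulA g y) tg_mulgV tg_mul1g tg_mulgV.
Qed.

Lemma tg_invK x : inv (inv x) = x.
Proof. by symmetry; apply: tg_inv_uniq; rewrite tg_mulVg. Qed.

Lemma tg_inv1 : inv one = one.
Proof. by symmetry; apply: tg_inv_uniq; rewrite tg_mul1g. Qed.
End Grp.

Section Words.
Variables (K : Type) (G : K -> topologicalType) (tg : forall a : K, topGroup (G a)).
Variable (a : forall k, G k).

Definition letter (p : set K * bool) : prod_topology G := fun k =>
  if `[< p.1 k >] then (if p.2 then a k else tg_inv (tg k) (a k)) else tg_one (tg k).

Definition wval (l : seq (set K * bool)) : prod_topology G :=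
  foldr (fun p acc => prod_mul tg (letter p) acc) (prod_one tg) l.

Lemma wval_cat l1 l2 : wval (l1 ++ l2) = prod_mul tg (wval l1) (wval l2).
Proof.
elim: l1 => [|p l1 IH] /=.
  by apply: functional_extensionality_dep => k; rewrite /prod_mul /prod_one tg_mul1g.
rewrite IH; apply: functional_extensionality_dep => k.
by rewrite /prod_mul tg_mulA.
Qed.

Definition flip (p : set K * bool) := (p.1, ~~ p.2).
Definition linv (l : seq (set K * bool)) := rev (map flip l).

Lemma letter_flip p : letter (flip p) = prod_inv tg (letter p).
Proof.
apply: functional_extensionality_dep => k; rewrite /letter /prod_inv /=.
case: ifP => _; last by rewrite tg_inv1.
by case: p.2 => //=; rewrite tg_invK.
Qed.

Lemma wval_linv l : wval (linv l) = prod_inv tg (wval l).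
Proof.
elim: l => [|p l IH].
  by apply: functional_extensionality_dep => k; rewrite /prod_inv /= tg_inv1.
rewrite /linv /= rev_cons -cats1 wval_cat -/(linv l) IH /= letter_flip.
apply: functional_extensionality_dep => k.
by rewrite /prod_mul /prod_inv /prod_one tg_mulg1 tg_invM.
Qed.

Definition wtrace (A : set K) (l : seq (set K * bool)) :=
  map (fun p => (p.1 `&` A, p.2)) l.

Lemma wval_trace (A : set K) l k : A k -> wval (wtrace A l) k = wval l k.
Proof.
move=> Ak; elim: l => [|p l IH] //=.
rewrite /prod_mul IH; congr (tg_mul _ _ _).
rewrite /letter /=.
have -> : `[< (p.1 `&` A) k >] = `[< p.1 k >].
  apply/asboolP/asboolP; first by case.
  by move=> h; split.
by [].
Qed.

Lemma wval_agree (A : set K) l l' : wtrace A l = wtrace A l' ->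
  forall k, A k -> wval l k = wval l' k.
Proof. by move=> e k Ak; rewrite -(wval_trace l Ak) e wval_trace. Qed.
End Words.

Lemma nat_inf : infinite_set [set: nat].
Proof. by apply/cle_infinite; exact: cle_refl. Qed.

Lemma countableU2 T (A B : set T) : countable A -> countable B -> countable (A `|` B).
Proof.
move=> /cleP cA /cleP cB; apply/cleP.
exact: cle_union2 nat_inf (hessenberg nat_inf) cA cB.
Qed.

Section S.
Variables (K : Type) (G : K -> topologicalType) (x : prod_topology G).
Definition Fx := [set U : set (prod_topology G) | exists J : set K, countable J /\
   forall f : prod_topology G, (forall j, J j -> f j = x j) -> U f].
Lemma FxF : Filter Fx.
Proof.
constructor.
- by exists set0; split => //.
- move=> P Q [J1 [c1 h1]] [J2 [c2 h2]]; exists (J1 `|` J2); split.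
    exact: countableU2.
  by move=> f hf; split; [apply: h1|apply: h2] => j Jj; apply: hf; [left|right].
- by move=> P Q PQ [J [cJ h]]; exists J; split => // f /h /PQ.
Qed.

Lemma Fx_cvg : (Fx : set_system (prod_topology G)) --> x.
Proof.
have := @cvg_sup (forall i, G i) K (fun i => Topological.class (initial_topology (fun f : (forall i, G i) => f i))) Fx x FxF.
move=> [_ h]; apply: h => i A.
rewrite nbhsE /=.
move=> [B [[V oV <-] /= Vx] BA].
exists [set i]; split; first exact: countable1.
by move=> f hf; apply: BA => /=; rewrite hf.
Qed.

Lemma open_countable_support (U : set (prod_topology G)) : open U -> U x ->
  exists J : set K, countable J /\ forall f, (forall j, J j -> f j = x j) -> U f.
Proof.
move=> oU Ux; have : nbhs x U by apply: open_nbhs_nbhs; split.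
by move/Fx_cvg.
Qed.
End S.

Lemma lallP T (A : set T) l : lall A l <-> (forall x, List.In x l -> A x).
Proof.
elim: l => [|y l IH] /=; first by split.
split.
  by move=> [Ay /IH h] x [<-|/h].
by move=> h; split; [apply: h; left|apply/IH => x Hx; apply: h; right].
Qed.

Lemma lall_cat T (A : set T) l1 l2 : lall A l1 -> lall A l2 -> lall A (l1 ++ l2).
Proof. by elim: l1 => //= x l IH [Ax Al] Al2; split => //; apply: IH. Qed.

Lemma lall_linv K (B : set (set K)) l :
  lall (B `*` [set: bool]) l -> lall (B `*` [set: bool]) (linv l).
Proof.
elim: l => [|p l IH] //= [[Bp _] Al].
rewrite /linv /= rev_cons -cats1; apply: lall_cat; first exact: IH.
by split.
Qed.

Lemma cle_bool_nat : cle [set: bool] [set: nat].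
Proof. by right; exists nat_of_bool; split => // -[] []. Qed.

Lemma cle_bool T (A : set T) : infinite_set A -> cle [set: bool] A.
Proof. by move=> /cle_infinite; exact: cle_trans cle_bool_nat. Qed.

Definition Sgrp K (G : K -> topologicalType) (tg : forall a : K, topGroup (G a))
  (a : forall k, G k) (F' : set (set K)) : set (prod_topology G) :=
  [set f | exists l, lall (F' `*` [set: bool]) l /\ f = wval tg a l].

Lemma Sgrp_subgroup K (G : K -> topologicalType) (tg : forall a : K, topGroup (G a))
  (a : forall k, G k) (F' : set (set K)) : prod_is_subgroup tg (Sgrp tg a F').
Proof.
split; [|split].
- by exists [::].
- move=> x y [l1 [A1 ->]] [l2 [A2 ->]]; exists (l1 ++ l2); split.
    exact: lall_cat.
  by rewrite wval_cat.
- move=> x [l [Al ->]]; exists (linv l); split; first exact: lall_linv.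
  by rewrite wval_linv.
Qed.

Lemma Sgrp_rothberger K (G : K -> topologicalType) (tg : forall a : K, topGroup (G a))
  (a : forall k, G k) (F F' : set (set K)) :
  infinite_set [set: K] -> F' `<=` F ->
  (forall A : set K, infinite_set A -> countable A ->
      card_le [set X `&` A | X in F] A) ->
  prod_rothberger_bounded tg (Sgrp tg a F').
Proof.
move=> Kinf sF KH U hU.
have [J hJ] : exists J : nat -> set K, forall n, countable (J n) /\
    forall f, (forall j, J n j -> f j = prod_one tg j) -> U n f.
  have h : forall n, exists Jn : set K, countable Jn /\
      forall f, (forall j, Jn j -> f j = prod_one tg j) -> U n f.
    by move=> n; have [oU Uo] := hU n; exact: open_countable_support oU Uo.
  by have [J hJ] := choice h; exists J.
have [k0 _] := inf_elt Kinf.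
have [e [_ ei]] := cle_fun k0 (proj1 (cle_infinite _) Kinf).
pose N0 := e @` [set: nat].
pose A := N0 `|` \bigcup_(n in [set: nat]) J n.
have cA : countable A.
  apply: countableU2; first by apply/cleP; exact: cle_image.
  by apply: bigcup_countable => // n _; case: (hJ n).
have iA : infinite_set A.
  apply/cle_infinite; right; exists e; split; first by move=> n _; left; exists n.
  by move=> x y _ _; apply: ei.
pose Tr := [set X `&` A | X in F].
have cTr : cle Tr [set: nat] by apply: cle_trans (proj1 (cleP _ _) (KH A iA cA)) (proj1 (cleP _ _) cA).
pose Cl := wtrace A @` [set l | lall (F' `*` [set: bool]) l].
have cCl : cle Cl [set: nat].
  have sub : Cl `<=` lall (Tr `*` [set: bool]).
    move=> _ [l Al <-]; elim: l Al => //= p l IH [[F'p _] Al]; split; last exact: IH.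
    by split => //; exists p.1 => //; apply: sF.
  apply: cle_trans (cle_sub sub) _.
  apply: cle_trans (cle_lall (cle_setX cTr cle_bool_nat)) _.
  apply: cle_trans (cle_lall (hessenberg nat_inf)) _.
  exact: cle_seq nat_inf.
have [c [_ ci]] := cle_fun 0%N cCl.
have [en hen] : exists en : nat -> seq (set K * bool), forall w, Cl w -> en (c w) = w.
  have h : forall n, exists w, (exists2 w', Cl w' & c w' = n) -> Cl w /\ c w = n.
    move=> n; have [[w' Cw' cw']|nw] := pselect (exists2 w', Cl w' & c w' = n).
      by exists w'.
    by exists [::].
  have [en hen] := choice h; exists en => w Cw.
  have [Ce ce] := hen (c w) (ex_intro2 _ _ w Cw erefl).
  exact: ci.
have [r hr] : exists r : seq (set K * bool) -> seq (set K * bool), forall w, Cl w ->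
    lall (F' `*` [set: bool]) (r w) /\ wtrace A (r w) = w.
  have h : forall w, exists l, Cl w -> lall (F' `*` [set: bool]) l /\ wtrace A l = w.
    move=> w; have [[l Al <-]|nw] := pselect (Cl w); first by exists l.
    by exists [::].
  by have [r hr] := choice h; exists r.
exists (fun n => wval tg a (r (en n))).
move=> f [l [Al ->]].
have Clw : Cl (wtrace A l) by exists l.
exists (c (wtrace A l)) => //.
rewrite hen //.
have [_ etr] := hr _ Clw.
have agree := wval_agree tg a etr.
exists (prod_mul tg (prod_inv tg (wval tg a (r (wtrace A l)))) (wval tg a l)).
  have [_ hU'] := hJ (c (wtrace A l)); apply: hU' => j Jj.
  rewrite /prod_mul /prod_inv /prod_one agree; last by right; exists (c (wtrace A l)).
  exact: tg_mulVg.
apply: functional_extensionality_dep => k.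
by rewrite /prod_mul /prod_inv tg_mulA tg_mulgV tg_mul1g.
Qed.

Lemma Sgrp_card K (G : K -> topologicalType) (tg : forall a : K, topGroup (G a))
  (a : forall k, G k) (F' : set (set K)) :
  infinite_set [set: K] -> (forall k, a k <> tg_one (tg k)) ->
  ~ cle F' [set: K] ->
  (forall T, T `<=` F' -> ~ cle T [set: K] -> cle F' T) ->
  has_card_succ K (Sgrp tg a F').
Proof.
move=> Kinf ha nF'K W2.
have F'inf : infinite_set F' by move=> fF; apply: nF'K; exact: finite_cle.
have cF'S : cle F' (Sgrp tg a F').
  right; exists (fun X => wval tg a [:: (X, true)]); split.
    by move=> X F'X; exists [:: (X, true)].
  move=> X Y _ _ e; apply/seteqP; split => k Xk; apply: contrapT => nk;
    have := congr1 (fun h => h k) e;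
    rewrite /wval /= /prod_mul /prod_one /letter /= !tg_mulg1.
    by rewrite (asboolT Xk) (asboolF nk); exact: ha.
  by rewrite (asboolT Xk) (asboolF nk) => /esym; exact: ha.
have cSF' : cle (Sgrp tg a F') F'.
  have -> : Sgrp tg a F' = wval tg a @` lall (F' `*` [set: bool]).
    by apply/seteqP; split => f; [move=> [l [Al ->]]; exists l|move=> [l Al <-]; exists l].
  apply: cle_trans (cle_image _ _) _.
  apply: cle_trans (cle_lall (cle_setX (cle_refl F') (cle_bool F'inf))) _.
  apply: cle_trans (cle_lall (hessenberg F'inf)) _.
  exact: cle_seq F'inf.
split.
  by move/cleP => h; apply: nF'K; exact: cle_trans cF'S h.
move=> T sT /cleP nTK; apply/cleP.
have Tinf : infinite_set T by move=> fT; apply: nTK; exact: finite_cle.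
have [w hw] : exists w : prod_topology G -> seq (set K * bool), forall s, T s ->
    lall (F' `*` [set: bool]) (w s) /\ s = wval tg a (w s).
  have h : forall s, exists l, T s -> lall (F' `*` [set: bool]) l /\ s = wval tg a l.
    move=> s; have [Ts|nTs] := pselect (T s); last by exists [::].
    by have [l hl] := sT s Ts; exists l.
  by have [w hw] := choice h; exists w.
pose lin X (l : seq (set K * bool)) := exists b, List.In (X, b) l.
pose Us := \bigcup_(s in T) [set X | lin X (w s)].
have UsF' : Us `<=` F'.
  move=> X [s Ts [b Xb]]; have [Al _] := hw s Ts.
  by have [] := proj1 (lallP _ _) Al _ Xb.
have nUsK : ~ cle Us [set: K].
  move=> cUs; apply: nTK.
  have cT : cle T (lall (Us `*` [set: bool])).
    right; exists w; split.
      move=> s Ts; apply/lallP => -[X b] Xb; split => //.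
      by exists s => //; exists b.
    move=> s s' Ts Ts' e.
    by rewrite (proj2 (hw s Ts)) (proj2 (hw s' Ts')) e.
  apply: cle_trans cT _.
  apply: cle_trans (cle_lall (cle_setX cUs (cle_bool Kinf))) _.
  apply: cle_trans (cle_lall (hessenberg Kinf)) _.
  exact: cle_seq Kinf.
have cUsT : cle Us T.
  apply: cle_bigcup => //; first exact: cle_refl.
  move=> s Ts.
  have sub : [set X | lin X (w s)] `<=`
      (fun i => (List.nth i (w s) (set0, true)).1) @` [set: nat].
    move=> X [b Xb]; have [i [_ ei]] := List.In_nth _ _ (set0, true) Xb.
    by exists i => //; rewrite ei.
  apply: cle_trans (cle_sub sub) _; apply: cle_trans (cle_image _ _) _.
  exact/cle_infinite.
apply: cle_trans cSF' _; apply: cle_trans (W2 _ UsF' nUsK) cUsT.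
Qed.

Theorem theorem9 (K : Type) (G : K -> topologicalType)
    (tg : forall a : K, topGroup (G a)) :
  ~ countable [set: K] ->
  (forall a : K, exists x y : G a, x <> y) ->
  KH_aleph1 K ->
  exists S : set (prod_topology G),
    prod_is_subgroup tg S /\ prod_rothberger_bounded tg S /\ has_card_succ K S.
Proof.
move=> nc H2 [F [nFK KH]].
have Kinf : infinite_set [set: K] by move=> fK; apply: nc; exact: finite_set_countable.
have ex_a : forall k, exists y : G k, y <> tg_one (tg k).
  move=> k; have [x [y xy]] := H2 k.
  have [ex|nex] := pselect (x = tg_one (tg k)); last by exists x.
  by exists y => ey; apply: xy; rewrite ex ey.
pose a := fun k => proj1_sig (cid (ex_a k)).
have ha : forall k, a k <> tg_one (tg k) by move=> k; exact: (proj2_sig (cid (ex_a k))).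
have [F' [sF [nF'K W2]]] := select_succ Kinf (fun h => nFK (proj2 (cleP _ _) h)).
exists (Sgrp tg a F'); split; first exact: Sgrp_subgroup.
split; first exact: (@Sgrp_rothberger K G tg a F F' Kinf sF KH).
exact: Sgrp_card.
Qed.
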